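(* Let $D$ be an integral domain with field of fractions $K$ and let $A$ be a $D$-algebra with standard assumptions. Assume that $A$ is an integral $D$-algebra of bounded degree $n$, i.e. every $a\in A$ satisfies $\mu_a(a)=0$ for some monic $\mu_a\in D[X]$ of degree $n$. Then $\textnormal{Int}_K(M_n(D)) \subseteq \textnormal{Int}_K(A)$, where $M_n(D)$ is the $D$-algebra of $n\times n$ matrices over $D$.
   Context: A $D$-algebra $A$ (not necessarily commutative) satisfies the standard assumptions if it is torsion-free as a $D$-module and $A\cap K = D$, where $A$ and $K$ are identified with their images in $B=K\otimes_D A$ via $a\mapsto 1\otimes a$ and $k\mapsto k\otimes 1$. Polynomials in $K[X]$ are evaluated at elements of $A$ inside $B$. $\textnormal{Int}_K(A)=\{f\in K[X]\mid f(A)\subseteq A\}$. An integral algebra of bounded degree $n$ is one in which each element satisfies a monic polynomial with coefficients in $D$ of degree at most $n$ (equivalently, after multiplying by a power of $X$, of degree exactly $n$). *)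

(* Defs.v *)
From HB Require Import structures.
From mathcomp Require Import all_boot all_order all_algebra.
Set Implicit Arguments. Unset Strict Implicit. Unset Printing Implicit Defensive.
Import Order.TTheory GRing.Theory Num.Theory.
Local Open Scope ring_scope.

(* K = field of fractions of D, realised as {fraction D}; D -> K is tofrac. *)
Notation fracD D := (@FracField.tofrac D).

Definition peval (K : fieldType) (B : algType K) (f : {poly K}) (x : B) : B :=
  \sum_(i < size f) f`_i *: x ^+ i.

Definition mxeval (K : fieldType) (n : nat) (f : {poly K}) (M : 'M[K]_n)
  : 'M[K]_n := \sum_(i < size f) f`_i *: M ^+ i.

(* A D-algebra A satisfying the standard assumptions, presented inside
   B = K (x)_D A: B is a K-algebra, A is a subset of B which is a subring
   stable under multiplication by (the image of) D, B = K.A, and A cap K = D. *)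
Definition standard_assumptions (D : idomainType) (B : algType {fraction D})
    (A : B -> Prop) : Prop :=
  [/\ A 1,
      (forall x y, A x -> A y -> A (x - y)) &
      (forall x y, A x -> A y -> A (x * y))] /\
  (forall (d : D) x, A x -> A (fracD D d *: x)) /\
  (* B = K (x)_D A: every element of B is (1/d) a with d in D \ 0, a in A *)
  (forall b : B, exists d : D, d != 0 /\ A (fracD D d *: b)) /\
  (forall k : {fraction D}, A (k%:A) -> exists d : D, k = fracD D d).

Definition IntK (D : idomainType) (B : algType {fraction D}) (A : B -> Prop)
    (f : {poly {fraction D}}) : Prop :=
  forall a, A a -> A (peval f a).

Definition IntK_Mn (D : idomainType) (n : nat) (f : {poly {fraction D}}) : Prop :=
  forall M : 'M[D]_n, exists N : 'M[D]_n,
    mxeval f (map_mx (fracD D) M) = map_mx (fracD D) N.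

Definition integral_bounded_degree (D : idomainType) (B : algType {fraction D})
    (A : B -> Prop) (n : nat) : Prop :=
  forall a, A a -> exists mu : {poly D},
    [/\ mu \is monic, size mu = n.+1 & peval (map_poly (fracD D) mu) a = 0].

(* Main.v *)
Require Import Defs.
From HB Require Import structures.
From mathcomp Require Import all_boot all_order all_algebra.
Import GRing.Theory.
Local Open Scope ring_scope.

Section Aux.
Variable D : idomainType.
Local Notation K := {fraction D}.
Local Notation tf := (@FracField.tofrac D).

Lemma peval_horner (B : algType K) (f : {poly K}) (x : B) :
  peval f x = horner_alg x f.
Proof.
rewrite /peval /horner_alg /horner_morph /= horner_coef size_map_poly.
by apply: eq_bigr => i _; rewrite coef_map /= mulr_algl.
Qed.

Lemma mxeval_horner m (M : 'M[K]_m.+1) (f : {poly K}) :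
  mxeval f M = horner_mx M f.
Proof.
rewrite /mxeval /horner_mx /horner_morph /= horner_coef size_map_poly.
by apply: eq_bigr => i _; rewrite coef_map /= -mul_scalar_mx.
Qed.

Definition cmx (p : {poly D}) (d : nat) : 'M[D]_d :=
  \matrix_(i < d, j < d)
    if (i == d.-1 :> nat) then - p`_j else (i.+1 == j :> nat)%:R.

Lemma cmxK p d : p \is monic -> (size p).-1 = d -> char_poly (cmx p d) = p.
Proof. by move=> mp <-; exact: companionmxK. Qed.

Lemma sum_ind (s : nat) (G : nat -> K) (j : nat) :
  \sum_(k < s) G k * (k == j :> nat)%:R = if (j < s)%N then G j else 0.
Proof.
elim: s => [|s IH]; first by rewrite big_ord0.
rewrite big_ord_recr /= IH.
case: (ltngtP j s) => h.
- by rewrite (ltn_trans h (ltnSn s)) mulr0 addr0.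
- by rewrite ltnNge h /= mulr0 addr0.
- by rewrite h ltnSn mulr1 add0r.
Qed.

Lemma key (mu : {poly D}) m (f : {poly K}) : mu \is monic -> size mu = m.+2 ->
  IntK_Mn m.+1 f -> forall j, (j < m.+1)%N ->
  exists d, (f %% map_poly tf mu)`_j = tf d.
Proof.
move=> mon sz Hf j hj.
pose C := cmx mu m.+1.
have [N HN] := Hf C.
pose CK := map_mx tf C.
have chK : char_poly CK = map_poly tf mu.
  by rewrite -map_char_poly cmxK // sz.
have ev : mxeval f CK = mxeval (f %% map_poly tf mu) CK.
  rewrite !mxeval_horner {1}(divp_eq f (map_poly tf mu)) rmorphD rmorphM /=.
  by rewrite -chK Cayley_Hamilton mulr0 add0r.
have rowpow : forall i, (i < m.+1)%N -> forall k : 'I_m.+1,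
    (CK ^+ i) 0 k = (i == k :> nat)%:R.
  elim=> [|i IH] hi k.
    by rewrite expr0 !mxE.
  have hi' : (i < m.+1)%N by apply: ltn_trans hi.
  rewrite exprSr !mxE (bigD1 (Ordinal hi')) //= IH // eqxx mul1r.
  rewrite big1 ?addr0; last first.
    move=> l hl; rewrite IH //.
    by move: hl; rewrite -val_eqE /= eq_sym => /negPf ->; rewrite mul0r.
  rewrite !mxE /=.
  have -> : (i == m) = false by apply/negbTE; rewrite neq_ltn -ltnS hi.
  by rewrite rmorph_nat.
set r := f %% map_poly tf mu.
have hsr : (size r <= m.+1)%N.
  have := ltn_modp f (map_poly tf mu).
  rewrite monic_neq0 ?monic_map // size_map_inj_poly //; last first.
    by move=> x y /eqP; rewrite tofrac_eq => /eqP.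
  by rewrite sz ltnS.
have E : (mxeval r CK) 0 (Ordinal hj) = r`_j.
  rewrite /mxeval summxE.
  rewrite (eq_bigr (fun k : 'I_(size r) => r`_k * (k == j :> nat)%:R)); last first.
    by move=> k _; rewrite mxE rowpow //; apply: leq_trans hsr.
  rewrite sum_ind; case: ltnP => // h.
  by rewrite nth_default.
exists (N 0 (Ordinal hj)).
by rewrite -E -ev HN mxE.
Qed.

End Aux.

Theorem mainTheorem1 (D : idomainType) (B : algType {fraction D})
    (A : B -> Prop) (n : nat) :
  standard_assumptions A ->
  integral_bounded_degree A n ->
  forall f : {poly {fraction D}}, IntK_Mn n f -> IntK A f.
Proof.
move=> [[H1 Hsub HM] [HZ _]] HI f Hf a Ha.
have [mu [mon sz root]] := HI a Ha.
set muK := map_poly (fracD D) mu.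
have rD : forall j, exists d, (f %% muK)`_j = fracD D d.
  move=> j; case: (ltnP j n) => hj.
    case: n HI sz Hf hj => [|m] _ sz Hf hj; first by [].
    exact: (@key D mu m f mon sz Hf j hj).
  exists 0; rewrite tofrac0 nth_default //.
  have := ltn_modp f muK.
  rewrite monic_neq0 ?monic_map // size_map_inj_poly //; last first.
    by move=> x y /eqP; rewrite tofrac_eq => /eqP.
  by rewrite sz ltnS => h; apply: leq_trans h hj.
have ev : peval f a = peval (f %% muK) a.
  rewrite !peval_horner {1}(divp_eq f muK) rmorphD rmorphM /=.
  by rewrite -[horner_alg a muK]peval_horner root mulr0 add0r.
have A0 : A 0 by rewrite -(subrr (1 : B)); apply: (Hsub).
have HD : forall x y, A x -> A y -> A (x + y).
  move=> x y hx hy; rewrite -[y]opprK -[- y]sub0r; apply: (Hsub) => //.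
  exact: (Hsub).
have Hpow : forall i, A (a ^+ i).
  by elim=> [|i IH]; rewrite ?expr0 // exprS; apply: (HM).
rewrite /IntK ev /peval; apply: (big_ind A) => // i _.
have [d ->] := rD i; exact: (HZ).
Qed.
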